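(* Let $n$ be a positive integer and $x\ge1$ real. Let $k$ be an integer in the range $$\min\{\Omega(d):d\in\mathcal{M}_x(n)\}\le k\le\max\{\Omega(d):d\in\mathcal{M}_x(n)\}$$ which is closest to $\Omega(n)/2$ among integers in this range. Then $|\mathcal{M}_x(n)|\le C_k(n)$.
   Context: $\Omega(n)$ is the number of prime factors of $n$ counted with multiplicity, and $C_k(n)$ is the number of positive divisors $d$ of $n$ with $\Omega(d)=k$. For $x\in\mathbb{R}$, a positive divisor $d$ of $n$ is maximal with respect to $x$ if $d\le x$ and there is no other positive divisor $d'$ of $n$ with $d'\le x$ and $d\mid d'$; $\mathcal{M}_x(n)$ denotes the set of such divisors. *)

(* Defs.v *)
From mathcomp Require Import all_boot all_order all_algebra.
From mathcomp Require Import reals.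
Set Implicit Arguments. Unset Strict Implicit. Unset Printing Implicit Defensive.
Import Order.TTheory GRing.Theory Num.Theory.

Definition bigOmega (n : nat) : nat := \sum_(p <- primes n) logn p n.

Definition Ck (k n : nat) : nat := count (fun d => bigOmega d == k) (divisors n).

(* M_x(n) : the divisors of n that are maximal w.r.t. x, as a list
   (without duplicates, since divisors n is uniq). *)
Definition maxdivs (R : realType) (x : R) (n : nat) : seq nat :=
  [seq d <- divisors n |
     ((d%:R <= x)%R &&
      all (fun d' => ~~ ((d'%:R <= x)%R && (d %| d') && (d' != d))) (divisors n))].

(* Main.v *)
Require Import Defs.
From mathcomp Require Import all_boot all_order all_algebra.
From mathcomp Require Import reals.
From mathcomp Require Import zify.
Import Order.TTheory GRing.Theory Num.Theory.

Lemma bigOmega_sub n d : 0 < n -> d %| n -> bigOmega d = \sum_(p <- primes n) logn p d.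
Proof.
move=> n0 dn.
rewrite /bigOmega.
rewrite [RHS](eq_bigr (fun p => if p \in primes d then logn p d else 0)); last first.
  by move=> p _; case: ifP => // /negbT; rewrite -logn_gt0 lt0n negbK => /eqP.
rewrite -[RHS](@big_mkcond _ _ _ _ (primes n) (fun p => p \in primes d) (fun p => logn p d)) -[RHS]big_filter.
apply: perm_big; apply: uniq_perm; rewrite ?filter_uniq ?primes_uniq //.
move=> p; rewrite mem_filter; case pd: (p \in primes d) => //=.
by move: pd; rewrite !mem_primes => /and3P [pp _ pd]; rewrite pp n0 (dvdn_trans pd dn).
Qed.

Lemma bigOmegaM a b : 0 < a -> 0 < b -> bigOmega (a * b) = bigOmega a + bigOmega b.
Proof.
move=> a0 b0.
have ab0 : 0 < a * b by rewrite muln_gt0 a0.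
rewrite (bigOmega_sub _ _ ab0 (dvdn_mulr b (dvdnn a))) (bigOmega_sub _ _ ab0 (dvdn_mull a (dvdnn b))).
rewrite -big_split /= /bigOmega; apply: eq_bigr => p _; exact: lognM.
Qed.

Lemma bigOmega_prime p : prime p -> bigOmega p = 1.
Proof. by move=> pp; rewrite /bigOmega primes_prime // big_seq1 logn_prime // eqxx. Qed.

Lemma bigOmega_div n w : 0 < n -> w %| n -> bigOmega (n %/ w) = bigOmega n - bigOmega w.
Proof.
move=> n0 wn.
have w0 : 0 < w by apply: dvdn_gt0 n0 wn.
have q0 : 0 < n %/ w by rewrite divn_gt0 // dvdn_leq.
by rewrite -{2}(divnK wn) bigOmegaM // addnK.
Qed.

Lemma bigOmega_le n d : 0 < n -> d %| n -> bigOmega d <= bigOmega n.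
Proof.
move=> n0 dn.
have d0 : 0 < d by apply: dvdn_gt0 n0 dn.
have q0 : 0 < n %/ d by rewrite divn_gt0 // dvdn_leq.
by rewrite -{1}(divnK dn) bigOmegaM // leq_addl.
Qed.

Lemma divnn_inv n X : 0 < n -> X %| n -> n %/ (n %/ X) = X.
Proof.
move=> n0 Xn.
have X0 : 0 < X by apply: dvdn_gt0 n0 Xn.
have q0 : 0 < n %/ X by rewrite divn_gt0 // dvdn_leq.
by rewrite -{1}(divnK Xn) mulKn.
Qed.

Lemma divdiv n u v : 0 < n -> u %| v -> v %| n -> n %/ v %| n %/ u.
Proof.
move=> n0 uv vn.
have v0 : 0 < v by apply: dvdn_gt0 n0 vn.
have u0 : 0 < u by apply: dvdn_gt0 v0 uv.
have E : n = n %/ v * (v %/ u) * u by rewrite -mulnA divnK // divnK.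
by rewrite {2}E mulnK // dvdn_mulr.
Qed.

Lemma divn_dvd' n d : d %| n -> n %/ d %| n.
Proof. by move=> dn; rewrite -{2}(divnK dn) dvdn_mulr. Qed.

Section Comb.
Local Open Scope ring_scope.
Definition Sf (e a : nat -> nat) (j : nat) : int :=
  (\sum_(0 <= l < j) ((e l)%:Z - 2 * (a l)%:Z))%R.
Definition Vf (e a : nat -> nat) (j : nat) : int := (Sf e a j - (a j)%:Z)%R.

Lemma Sf_rec e a j : Sf e a j.+1 = (Sf e a j + ((e j)%:Z - 2 * (a j)%:Z))%R.
Proof. by rewrite /Sf big_nat_recr. Qed.

Lemma Sf0 e a : Sf e a 0 = 0%R.
Proof. by rewrite /Sf big_geq. Qed.

Lemma Sf_sum e a j : Sf e a j =
  ((\sum_(0 <= l < j) e l)%N%:Z - 2 * (\sum_(0 <= l < j) a l)%N%:Z)%R.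
Proof.
elim: j => [|j IH]; first by rewrite Sf0 !big_geq.
rewrite Sf_rec IH !big_nat_recr //=. lia.
Qed.

Lemma Sf_delta e a1 a2 j1 j2 t :
  (forall l, (l < t)%N -> (a2 l)%:Z = ((a1 l)%:Z + (nat_of_bool (l == j1))%:Z - (nat_of_bool (l == j2))%:Z)%R) ->
  Sf e a2 t = (Sf e a1 t - 2 * (nat_of_bool (j1 < t)%N)%:Z + 2 * (nat_of_bool (j2 < t)%N)%:Z)%R.
Proof.
elim: t => [|t IH] H; first by rewrite !Sf0 !ltn0.
rewrite !Sf_rec IH; last by move=> l lt; apply: H; exact: ltnW.
have := H t (ltnSn t).
lia.
Qed.

Lemma key e a1 a2 j1 j2 : (j1 < j2)%N ->
  (forall l, (l <= j2)%N -> (a1 l + (l == j1) = a2 l + (l == j2))%N) ->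
  (Vf e a1 j1 < Vf e a1 j2)%R -> (Vf e a2 j2 <= Vf e a2 j1)%R -> False.
Proof.
move=> j12 H.
have H2 : forall l, (l < j2.+1)%N -> (a2 l)%:Z = ((a1 l)%:Z + (nat_of_bool (l == j1))%:Z - (nat_of_bool (l == j2))%:Z)%R.
  by move=> l; rewrite ltnS => /H; lia.
have E1 : Sf e a2 j1 = Sf e a1 j1.
  rewrite (Sf_delta e a1 a2 j1 j2 j1); last by move=> l lt; apply: H2; lia.
  rewrite ltnn ltnNge (ltnW j12) /=; lia.
have E2 : Sf e a2 j2 = (Sf e a1 j2 - 2)%R.
  rewrite (Sf_delta e a1 a2 j1 j2 j2); last by move=> l lt; apply: H2; lia.
  rewrite ltnn j12 /=; lia.
have A1 := H2 j1 (leqW j12).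
have A2 := H2 j2 (ltnSn j2).
rewrite eqxx (ltn_eqF j12) in A1.
rewrite eqxx (gtn_eqF j12) in A2.
rewrite /Vf E1 E2 A1 A2 /=. lia.
Qed.

Lemma lastargmin (f : nat -> int) r : (0 < r)%N -> exists j, [/\ (j < r)%N,
  forall t, (t < r)%N -> (f j <= f t)%R & forall t, (t < r)%N -> (j < t)%N -> (f j < f t)%R].
Proof.
elim: r => // r IH _.
case: r IH => [|r] IH.
  exists 0; split => // t; rewrite ltnS leqn0 => /eqP -> //; by rewrite ltnn.
have [j [jr H1 H2]] := IH erefl.
case: (lerP (f r.+1) (f j)) => h.
  exists r.+1; split => //.
    move=> t; rewrite ltnS leq_eqVlt => /orP [/eqP -> //| tr].
    by apply: le_trans h (H1 t tr).
  by move=> t tr /(leq_trans tr); rewrite ltnn.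
exists j; split => [|t|t]; first by apply: leq_trans jr _.
  rewrite ltnS leq_eqVlt => /orP [/eqP -> | tr]; [exact: ltW | exact: H1].
rewrite ltnS leq_eqVlt => /orP [/eqP -> // | tr]; exact: H2.
Qed.

End Comb.

Definition pp n j := nth 0 (primes n) j.
Definition ee n j := logn (pp n j) n.
Definition aa n d j := logn (pp n j) d.
Definition VV n d j := Vf (ee n) (aa n d) j.
Definition Qb n d j : bool := (size (primes n) == 0%N) ||
  [&& (j < size (primes n))%N, all (fun t => (VV n d j <= VV n d t)%R) (iota 0 (size (primes n)))
    & all (fun t => (j < t)%N ==> (VV n d j < VV n d t)%R) (iota 0 (size (primes n)))].

Lemma existsQ n d : exists j, Qb n d j.
Proof.
case: (posnP (size (primes n))) => [E|r0]; first by exists 0; rewrite /Qb E.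
have [j [jr H1 H2]] := lastargmin (VV n d) _ r0.
exists j; apply/orP; right; apply/and3P; split => //; apply/allP => t;
  rewrite mem_iota add0n => /andP [_ tr].
  exact: H1.
by apply/implyP; apply: H2.
Qed.

Definition J n d := xchoose (existsQ n d).
Definition F n d := d * pp n (J n d).

Lemma Omega_sum n d : 0 < n -> d %| n ->
  bigOmega d = \sum_(0 <= l < size (primes n)) aa n d l.
Proof. by move=> n0 dn; rewrite (bigOmega_sub _ _ n0 dn) (big_nth 0). Qed.

Lemma pp_prime n j : j < size (primes n) -> prime (pp n j).
Proof. by move=> jr; have := mem_nth 0 jr; rewrite mem_primes => /andP[]. Qed.

Lemma J_spec n d : 0 < n -> d %| n -> 2 * bigOmega d + 1 <= bigOmega n ->
  [/\ J n d < size (primes n),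
      forall t, t < size (primes n) -> (VV n d (J n d) <= VV n d t)%R,
      forall t, t < size (primes n) -> J n d < t -> (VV n d (J n d) < VV n d t)%R
    & aa n d (J n d) < ee n (J n d)].
Proof.
move=> n0 dn hO.
have On := Omega_sum n n n0 (dvdnn n).
have Od := Omega_sum n d n0 dn.
have r0 : 0 < size (primes n).
  rewrite lt0n; apply/negP => /eqP E; move: On; rewrite E big_geq //; lia.
have := xchooseP (existsQ n d); rewrite -/(J n d) /Qb.
have -> : (size (primes n) == 0) = false by rewrite eqn0Ngt r0.
move=> /and3P [jr /allP A1 /allP A2].
have H1 : forall t, t < size (primes n) -> (VV n d (J n d) <= VV n d t)%R.
  by move=> t tr; apply: A1; rewrite mem_iota add0n tr.
have H2 : forall t, t < size (primes n) -> J n d < t -> (VV n d (J n d) < VV n d t)%R.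
  by move=> t tr jt; move: (A2 t); rewrite mem_iota add0n tr jt => /(_ isT).
split => //.
set j := J n d in jr H1 H2 *.
have ale : forall l, l < size (primes n) -> aa n d l <= ee n l.
  by move=> l _; apply: dvdn_leq_log.
case: (ltnP (aa n d j) (ee n j)) => // hge; exfalso.
have eqa : aa n d j = ee n j by apply/eqP; rewrite eqn_leq hge ale.
case: (ltnP j.+1 (size (primes n))) => hj.
  have := H2 j.+1 hj (ltnSn j); rewrite /VV /Vf Sf_rec. lia.
have rj : size (primes n) = j.+1 by apply/eqP; rewrite eqn_leq hj jr.
have S := Sf_sum (ee n) (aa n d) (size (primes n)).
have V0 := H1 0 r0.
move: V0 S; rewrite /VV /Vf rj Sf_rec Sf0.
rewrite rj in On Od.
have -> : \sum_(0 <= l < j.+1) ee n l = \sum_(0 <= l < j.+1) aa n n l by [].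
rewrite -On -Od. lia.
Qed.

Lemma F_props n d : 0 < n -> d %| n -> 2 * bigOmega d + 1 <= bigOmega n ->
  [/\ F n d %| n, bigOmega (F n d) = bigOmega d + 1 & d %| F n d].
Proof.
move=> n0 dn hO.
have [jr _ _ lt] := J_spec n d n0 dn hO.
have pr := pp_prime n (J n d) jr.
have d0 : 0 < d by apply: dvdn_gt0 n0 dn.
split; last by rewrite /F dvdn_mulr.
  have pin : pp n (J n d) \in primes (n %/ d).
    by rewrite -logn_gt0 logn_div // subn_gt0.
  have pd : pp n (J n d) %| n %/ d by move: pin; rewrite mem_primes => /and3P [].
  by rewrite /F -[X in _ %| X](divnK dn) [X in _ %| X]mulnC dvdn_pmul2l.
by rewrite /F (bigOmegaM _ _ d0 (prime_gt0 pr)) (bigOmega_prime _ pr).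
Qed.

Lemma F_inj n d1 d2 : 0 < n -> d1 %| n -> d2 %| n ->
  2 * bigOmega d1 + 1 <= bigOmega n -> 2 * bigOmega d2 + 1 <= bigOmega n ->
  F n d1 = F n d2 -> d1 = d2.
Proof.
move=> n0 d1n d2n h1 h2 E.
have [j1r H11 H12 _] := J_spec n d1 n0 d1n h1.
have [j2r H21 H22 _] := J_spec n d2 n0 d2n h2.
have d10 : 0 < d1 by apply: dvdn_gt0 n0 d1n.
have d20 : 0 < d2 by apply: dvdn_gt0 n0 d2n.
have p1 := pp_prime n _ j1r.
have p2 := pp_prime n _ j2r.
have Hl : forall l, l < size (primes n) ->
    aa n d1 l + (l == J n d1) = aa n d2 l + (l == J n d2).
  move=> l lr; have := congr1 (logn (pp n l)) E.
  rewrite /F !lognM ?(prime_gt0 p1) ?(prime_gt0 p2) // (logn_prime _ p1) (logn_prime _ p2) /pp !nth_uniq ?primes_uniq //.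
have j12 : J n d1 = J n d2.
  case: (ltngtP (J n d1) (J n d2)) => h //; exfalso.
    apply: (key (ee n) (aa n d1) (aa n d2) (J n d1) (J n d2) h).
    - by move=> l lj; apply: Hl; apply: leq_ltn_trans lj j2r.
    - exact: H12.
    - exact: H21.
  apply: (key (ee n) (aa n d2) (aa n d1) (J n d2) (J n d1) h).
  - by move=> l lj; apply/esym/Hl; apply: leq_ltn_trans lj j1r.
  - exact: H22.
  - exact: H11.
move: E; rewrite /F j12 => /eqP; rewrite eqn_pmul2r ?prime_gt0 // -?j12 //.
by move/eqP.
Qed.

Lemma iter_props n m d : 0 < n -> d %| n ->
  (forall j, bigOmega d <= j < bigOmega d + m -> 2 * j + 1 <= bigOmega n) ->
  [/\ iter m (F n) d %| n, bigOmega (iter m (F n) d) = bigOmega d + m & d %| iter m (F n) d].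
Proof.
move=> n0 dn; elim: m => [|m IH] H; first by rewrite addn0 dvdnn.
have [h1 h2 h3] : [/\ iter m (F n) d %| n, bigOmega (iter m (F n) d) = bigOmega d + m & d %| iter m (F n) d].
  by apply: IH => j hj; apply: H; lia.
rewrite iterS.
have hO : 2 * bigOmega (iter m (F n) d) + 1 <= bigOmega n by rewrite h2; apply: H; lia.
have [f1 f2 f3] := F_props n _ n0 h1 hO.
split => //; first by rewrite f2 h2; lia.
exact: dvdn_trans h3 f3.
Qed.

Lemma iter_inj n m d1 d2 : 0 < n -> d1 %| n -> d2 %| n -> bigOmega d1 = bigOmega d2 ->
  (forall j, bigOmega d1 <= j < bigOmega d1 + m -> 2 * j + 1 <= bigOmega n) ->
  iter m (F n) d1 = iter m (F n) d2 -> d1 = d2.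
Proof.
move=> n0 d1n d2n eO; elim: m => [|m IH] H //.
have H' : forall j, bigOmega d1 <= j < bigOmega d1 + m -> 2 * j + 1 <= bigOmega n.
  by move=> j hj; apply: H; lia.
have [a1 a2 _] := iter_props n m d1 n0 d1n H'.
have [b1 b2 _] : [/\ iter m (F n) d2 %| n, bigOmega (iter m (F n) d2) = bigOmega d2 + m & d2 %| iter m (F n) d2].
  by apply: iter_props => // j hj; apply: H'; lia.
rewrite !iterS => E; apply: IH => //.
apply: (F_inj n _ _ n0 a1 b1) => //.
- by rewrite a2; apply: H; lia.
- by rewrite b2 -eO; apply: H; lia.
Qed.

Lemma chain n t a b : 0 < n -> a %| n -> b %| n -> bigOmega a <= bigOmega b -> bigOmega b <= t ->
  (forall j, bigOmega a <= j < t -> 2 * j + 1 <= bigOmega n) ->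
  iter (t - bigOmega a) (F n) a = iter (t - bigOmega b) (F n) b -> a %| b.
Proof.
move=> n0 an bn hab hbt H.
have E : t - bigOmega a = (t - bigOmega b) + (bigOmega b - bigOmega a) by lia.
rewrite E iterD => Hq.
have [c1 c2 c3] : [/\ iter (bigOmega b - bigOmega a) (F n) a %| n,
   bigOmega (iter (bigOmega b - bigOmega a) (F n) a) = bigOmega a + (bigOmega b - bigOmega a)
   & a %| iter (bigOmega b - bigOmega a) (F n) a].
  by apply: iter_props => // j hj; apply: H; lia.
set X := iter (bigOmega b - bigOmega a) (F n) a in Hq c1 c2 c3 *.
rewrite subnKC // in c2.
suff XE : X = b by rewrite -XE.
apply: (iter_inj n (t - bigOmega b) _ b n0 c1 bn) => //.
rewrite c2 subnKC // => j hj; apply: H.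
move: hj hab; clear; lia.
Qed.

Lemma bigminn_le (s : seq nat) h y : y \in s -> \big[minn/h]_(j <- s) j <= y.
Proof.
elim: s => // z s IH; rewrite inE big_cons => /orP [/eqP -> | ys].
  exact: geq_minl.
exact: leq_trans (geq_minr _ _) (IH ys).
Qed.

Theorem lemma3p18 (R : realType) (n : nat) (x : R) (k : nat) :
  (0 < n)%N -> (1 <= x)%R ->
  let Om := [seq bigOmega d | d <- maxdivs x n] in
  let hi := \max_(j <- Om) j in
  let lo := \big[minn/hi]_(j <- Om) j in
  (lo <= k <= hi)%N ->
  (forall j : nat, (lo <= j <= hi)%N ->
     (`|(2 * k)%:Z - (bigOmega n)%:Z| <= `|(2 * j)%:Z - (bigOmega n)%:Z|)%R) ->
  (size (maxdivs x n) <= Ck k n)%N.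
Proof.
move=> n0 _ Om hi lo /andP [lok khi] Hk.
have Adiv : forall d, d \in maxdivs x n -> d %| n.
  by move=> d; rewrite mem_filter => /andP [_]; rewrite -dvdn_divisors.
have Aanti : forall a b, a \in maxdivs x n -> b \in maxdivs x n -> a %| b -> a = b.
  move=> a b; rewrite !mem_filter => /andP [/andP [ax /allP Hall] ad] /andP [/andP [bx _] bd] ab.
  by have := Hall b bd; rewrite bx ab /= negbK => /eqP.
have Arange : forall d, d \in maxdivs x n -> (lo <= bigOmega d) && (bigOmega d <= hi).
  move=> d dA; have dOm : bigOmega d \in Om by apply: map_f.
  apply/andP; split; first rewrite /lo.
 exact: (bigminn_le Om hi (bigOmega d) dOm).
  by rewrite /hi; apply: (@leq_bigmax_seq nat Om xpredT id _ dOm isT).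
have AO : forall d, d \in maxdivs x n -> bigOmega d <= bigOmega n.
  by move=> d dA; apply: bigOmega_le => //; apply: Adiv.
have Hk1 : forall j, lo <= j -> j < k -> 2 * j + 1 <= bigOmega n.
  move=> j lj jk.
  have := Hk k.-1 ltac:(apply/andP; split; lia).
  move: lj jk; clear; lia.
have Hk2 : forall j, k < j -> j <= hi -> bigOmega n <= 2 * k + 1.
  move=> j kj jh.
  have := Hk k.+1 ltac:(apply/andP; split; lia).
  move: kj jh; clear; lia.
pose G d := if bigOmega d <= k then iter (k - bigOmega d) (F n) d
             else n %/ iter (bigOmega d - k) (F n) (n %/ d).
have Up : forall d, d \in maxdivs x n -> bigOmega d <= k ->
   [/\ iter (k - bigOmega d) (F n) d %| n,
       bigOmega (iter (k - bigOmega d) (F n) d) = k & d %| iter (k - bigOmega d) (F n) d].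
  move=> d dA dk.
  have [c1 c2 c3] := iter_props n (k - bigOmega d) d n0 (Adiv d dA)
     (fun j hj => Hk1 j ltac:(move: (Arange d dA) hj; clear; lia) ltac:(move: dk hj; clear; lia)).
  by split => //; rewrite c2 subnKC.
have Dn : forall d, d \in maxdivs x n -> k < bigOmega d ->
   [/\ iter (bigOmega d - k) (F n) (n %/ d) %| n,
       bigOmega (iter (bigOmega d - k) (F n) (n %/ d)) = bigOmega n - k
     & n %/ d %| iter (bigOmega d - k) (F n) (n %/ d)].
  move=> d dA dk.
  have dn := Adiv d dA.
  have Ow := bigOmega_div n d n0 dn.
  have O2 := Hk2 (bigOmega d) dk ltac:(move: (Arange d dA); clear; lia).
  have Od := AO d dA.
  have [c1 c2 c3] := iter_props n (bigOmega d - k) (n %/ d) n0 (divn_dvd' n d dn)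
     (fun j hj => ltac:(rewrite Ow in hj; move: hj O2 Od dk; clear; lia)).
  by split => //; rewrite c2 Ow; move: Od dk; clear; lia.
have Gin : forall d, d \in maxdivs x n -> G d \in [seq d <- divisors n | bigOmega d == k].
  move=> d dA; rewrite mem_filter -dvdn_divisors // /G.
  case: ifP => dk.
    by have [c1 c2 _] := Up d dA dk; rewrite c2 eqxx c1.
  have dk' : k < bigOmega d by rewrite ltnNge dk.
  have [c1 c2 _] := Dn d dA dk'.
  rewrite divn_dvd' // andbT bigOmega_div // c2.
  apply/eqP; move: (AO d dA) dk'; clear; lia.
have Ginj : {in maxdivs x n &, injective G}.
  move=> a b aA bA; rewrite /G.
  have an := Adiv a aA; have bn := Adiv b bA.
  case: ifP => ha; case: ifP => hb.
  - move=> E; case: (leqP (bigOmega a) (bigOmega b)) => hab.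
      apply: (Aanti _ _ aA bA); apply: (chain n k a b n0 an bn hab hb _ E).
      by move=> j hj; apply: Hk1; move: (Arange a aA) hj; clear; lia.
    apply/esym; apply: (Aanti _ _ bA aA); apply: (chain n k b a n0 bn an (ltnW hab) ha _ (esym E)).
    by move=> j hj; apply: Hk1; move: (Arange b bA) hj; clear; lia.
  - have hb' : k < bigOmega b by rewrite ltnNge hb.
    have [c1 c2 c3] := Dn b bA hb'.
    have [u1 u2 u3] := Up a aA ha.
    move=> E; apply: (Aanti _ _ aA bA).
    apply: dvdn_trans u3 _; rewrite E.
    by have := divdiv n _ _ n0 c3 c1; rewrite divnn_inv.
  - have ha' : k < bigOmega a by rewrite ltnNge ha.
    have [c1 c2 c3] := Dn a aA ha'.
    have [u1 u2 u3] := Up b bA hb.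
    move=> E; apply/esym; apply: (Aanti _ _ bA aA).
    apply: dvdn_trans u3 _; rewrite -E.
    by have := divdiv n _ _ n0 c3 c1; rewrite divnn_inv.
  have ha' : k < bigOmega a by rewrite ltnNge ha.
  have hb' : k < bigOmega b by rewrite ltnNge hb.
  have [c1 c2 c3] := Dn a aA ha'.
  have [d1 d2 d3] := Dn b bA hb'.
  move=> E.
  have XY : iter (bigOmega a - k) (F n) (n %/ a) = iter (bigOmega b - k) (F n) (n %/ b).
    by rewrite -(divnn_inv n _ n0 c1) E divnn_inv.
  have Oa := bigOmega_div n a n0 an.
  have Ob := bigOmega_div n b n0 bn.
  have Ha := AO a aA.
  have Hb := AO b bA.
  have O2 := Hk2 (bigOmega a) ha' ltac:(move: (Arange a aA); clear; lia).
  have ea : bigOmega a - k = (bigOmega n - k) - bigOmega (n %/ a) by rewrite Oa; move: Ha ha'; clear; lia.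
  have eb : bigOmega b - k = (bigOmega n - k) - bigOmega (n %/ b) by rewrite Ob; move: Hb hb'; clear; lia.
  rewrite ea eb in XY.
  have na := divn_dvd' n a an.
  have nb := divn_dvd' n b bn.
  case: (leqP (bigOmega (n %/ a)) (bigOmega (n %/ b))) => h.
    have := chain n (bigOmega n - k) _ _ n0 na nb h
      ltac:(rewrite Ob; move: hb' Hb; clear; lia)
      ltac:(move=> j hj; rewrite Oa in hj; move: hj O2 Ha ha'; clear; lia) XY.
    move=> /(divdiv n _ _ n0) => /(_ (divn_dvd' n b bn)); rewrite !divnn_inv // => ba.
    by apply/esym; exact: (Aanti _ _ bA aA ba).
  have := chain n (bigOmega n - k) _ _ n0 nb na (ltnW h)
    ltac:(rewrite Oa; move: ha' Ha; clear; lia)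
    ltac:(move=> j hj; rewrite Ob in hj; move: hj O2 Hb hb'; clear; lia) (esym XY).
  move=> /(divdiv n _ _ n0) => /(_ (divn_dvd' n a an)); rewrite !divnn_inv // => ab.
  by exact: (Aanti _ _ aA bA ab).
have U : uniq (map G (maxdivs x n)) by rewrite map_inj_in_uniq // filter_uniq // divisors_uniq.
rewrite -(size_map G) /Ck -size_filter.
apply: uniq_leq_size U _ => y /mapP [d dA ->]; exact: Gin.
Qed.
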